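(* Let $(\Omega,d)$ be a noncomplete $L$-quasiconvex metric space which is open in its completion, and let $\mu$ be a Borel measure on $\Omega$ which is globally doubling on $(\Omega,d)$ with doubling constant $C_\mu$. Let $\alpha>0$. Then $\mu^\alpha$ is doubling on $(\Omega,k)$ for $k$-balls of radii at most $\tfrac18$, with doubling constant $4^\alpha C_\mu^m$ where $m=\lceil\log_2 8L\rceil$. Moreover, for every $R_1>0$, $\mu^\alpha$ is doubling on $(\Omega,k)$ for $k$-balls of radii at most $R_1$.
   Context: A metric space is $L$-quasiconvex if any two points $x,y$ can be joined by a curve of length at most $L\,d(x,y)$. Let $\partial\Omega$ be the boundary of $\Omega$ in its completion and $d_\Omega(x)=\operatorname{dist}(x,\partial\Omega)$. The quasihyperbolic metric is $k(x,y)=\inf_\gamma\int_\gamma\frac{ds}{d_\Omega(\gamma(s))}$, the infimum over rectifiable curves in $\Omega$ joining $x$ to $y$; $k$-balls are balls with respect to $k$. For $\alpha>0$, $\mu^\alpha(E)=\int_E d_\Omega(x)^{-\alpha}\,d\mu(x)$. A measure $\nu$ is doubling for balls of radii at most $R$ with constant $C$ if $0<\nu(B(x,2r))\le C\nu(B(x,r))<\infty$ for all $x$ and $0<r\le R$; globally doubling if this holds for all $r>0$. *)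

(* Defs.v *)
From HB Require Import structures.
From mathcomp Require Import all_boot all_order all_algebra.
From mathcomp Require Import all_classical all_reals all_analysis.
Set Implicit Arguments. Unset Strict Implicit. Unset Printing Implicit Defensive.
Import Order.TTheory GRing.Theory Num.Theory.
Import numFieldNormedType.Exports.
Local Open Scope classical_set_scope.
Local Open Scope ring_scope.

Section MetricDefs.
Variable R : realType.

Definition is_metric (T : Type) (d : T -> T -> R) : Prop :=
  [/\ (forall x y, 0 <= d x y),
      (forall x y, d x y = 0 <-> x = y),
      (forall x y, d x y = d y x) &
      (forall x y z, d x z <= d x y + d y z)].

Definition dball (T : Type) (d : T -> T -> R) (x : T) (r : R) : set T :=
  [set y | d x y < r].

Definition dopen (T : Type) (d : T -> T -> R) (U : set T) : Prop :=
  forall x, U x -> exists2 e : R, 0 < e & dball d x e `<=` U.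

Definition dcomplete (T : Type) (d : T -> T -> R) : Prop :=
  forall u : nat -> T,
    (forall e : R, 0 < e -> exists N, forall m n, (N <= m)%N -> (N <= n)%N -> d (u m) (u n) < e) ->
    exists l, forall e : R, 0 < e -> exists N, forall n, (N <= n)%N -> d (u n) l < e.

(* (X, dX, iota) is a completion of (T, d) in which T is open:
   iota is an isometric embedding with dense image, X is complete,
   and the image of iota is open in X. *)
Definition open_completion (T X : Type) (d : T -> T -> R) (dX : X -> X -> R)
    (iota : T -> X) : Prop :=
  [/\ is_metric dX,
      (forall x y, dX (iota x) (iota y) = d x y),
      (forall z e, 0 < e -> exists x, dX z (iota x) < e),
      dcomplete dX &
      dopen dX (range iota)].

(* distance to the boundary  (boundary = X minus the image of T) *)
Definition dist_bdry (T X : Type) (dX : X -> X -> R) (iota : T -> X) (x : T) : R :=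
  inf [set dX (iota x) z | z in ~` range iota].

Definition curve (T : Type) (d : T -> T -> R) (g : R -> T) (a b : R) : Prop :=
  a <= b /\
  forall t, a <= t <= b -> forall e, 0 < e -> exists2 del, 0 < del &
    forall s, a <= s <= b -> `|t - s| < del -> d (g t) (g s) < e.

Definition curve_length (T : Type) (d : T -> T -> R) (g : R -> T) (a b : R) : \bar R :=
  ereal_sup [set v | exists (n : nat) (t : nat -> R),
    [/\ t 0%N = a, t n = b, (forall i, (i < n)%N -> t i <= t i.+1) &
        v = (\sum_(i < n) d (g (t i)) (g (t i.+1)))%:E]].

Definition arclength_param (T : Type) (d : T -> T -> R) (g : R -> T) (a b : R)
    (gs : R -> T) : Prop :=
  forall t, a <= t <= b -> gs (fine (curve_length d g a t)) = g t.

(* line integral along gamma of rho wrt arc length, given its arc-length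
   parametrization gs: int_0^{length} rho (gs s) ds *)
Definition line_integral (rho : R -> R) (ell : R) : \bar R :=
  (\int[@lebesgue_measure R]_(s in `[0%R, ell]%classic) (rho s)%:E)%E.

Definition qh_dist (T : Type) (d : T -> T -> R) (dO : T -> R) (x y : T) : \bar R :=
  ereal_inf [set v | exists (a b : R) (g gs : R -> T),
    [/\ curve d g a b, g a = x, g b = y,
        (curve_length d g a b < +oo)%E /\ arclength_param d g a b gs &
        v = line_integral (fun s => (dO (gs s))^-1) (fine (curve_length d g a b))]].

Definition kball (T : Type) (k : T -> T -> \bar R) (x : T) (r : R) : set T :=
  [set y | (k x y < r%:E)%E].

Definition quasiconvex (T : Type) (d : T -> T -> R) (L : R) : Prop :=
  forall x y, exists (a b : R) (g : R -> T),
    [/\ curve d g a b, g a = x, g b = y & (curve_length d g a b <= (L * d x y)%:E)%E].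

Definition doubling_upto (T : Type) (nu : set T -> \bar R) (ball : T -> R -> set T)
    (Rmax C : R) : Prop :=
  forall x r, 0 < r -> r <= Rmax ->
    [/\ (0 < nu (ball x (2 * r)%R))%E, (nu (ball x (2 * r)%R) <= C%:E * nu (ball x r))%E
        & (nu (ball x r) < +oo)%E].

Definition doubling_global (T : Type) (nu : set T -> \bar R) (ball : T -> R -> set T)
    (C : R) : Prop :=
  forall x r, 0 < r ->
    [/\ (0 < nu (ball x (2 * r)%R))%E, (nu (ball x (2 * r)%R) <= C%:E * nu (ball x r))%E
        & (nu (ball x r) < +oo)%E].

Definition weighted_measure (dd : measure_display) (T : measurableType dd)
    (mu : {measure set T -> \bar R}) (dO : T -> R) (alpha : R) (E : set T) : \bar R :=
  (\int[mu]_(x in E) ((dO x) `^ (- alpha))%:E)%E.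

End MetricDefs.

(* Main.v *)
Require Import Defs.
From HB Require Import structures.
From mathcomp Require Import all_boot all_order all_algebra.
From mathcomp Require Import all_classical all_reals all_analysis.
From mathcomp Require Import ring lra.
Import Order.TTheory GRing.Theory Num.Theory.
Import numFieldNormedType.Exports.
Local Open Scope classical_set_scope.
Local Open Scope ring_scope.
Set Implicit Arguments. Unset Strict Implicit. Unset Printing Implicit Defensive.
Section Parts.
Variables (R : realType) (T : Type) (d : T -> T -> R).
Hypothesis dm : is_metric d.
Variable g : R -> T.

Lemma d_ge0 x y : 0 <= d x y. Proof. by case: dm. Qed.
Lemma d_xx x : d x x = 0. Proof. by case: dm => _ H _ _; apply/H. Qed.
Lemma d_sym x y : d x y = d y x. Proof. by case: dm. Qed.
Lemma d_tri x y z : d x z <= d x y + d y z. Proof. by case: dm. Qed.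

Definition psum (t : nat -> R) n := \sum_(i < n) d (g (t i)) (g (t i.+1)).
Definition PS a b : set R := [set r | exists n (t : nat -> R),
  [/\ t 0%N = a, t n = b, (forall i, (i < n)%N -> t i <= t i.+1) & r = psum t n]].

Lemma curve_length_PS a b : curve_length d g a b = ereal_sup (EFin @` PS a b).
Proof.
rewrite /curve_length; congr ereal_sup; apply/seteqP; split => v.
  by move=> [n [t [h0 h1 h2 ->]]]; exists (psum t n) => //; exists n, t.
by move=> [r [n [t [h0 h1 h2 ->]]] <-]; exists n, t.
Qed.

Lemma PS_0 a : PS a a 0.
Proof. by exists 0%N, (fun=> a); split => //; rewrite /psum big_ord0. Qed.

Definition tcons (a : R) (t : nat -> R) := fun i => if i is j.+1 then t j else a.

Lemma PS_cons a c b s : a <= c -> PS c b s -> PS a b (d (g a) (g c) + s).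
Proof.
move=> ac [n [t [t0 tn tm ->]]]; exists n.+1, (tcons a t); split => //.
- by case=> [_|i /= Hi]; [rewrite /= t0 | apply: tm].
- by rewrite /psum big_ord_recl /= t0.
Qed.

Lemma PS_elim (P : R -> R -> R -> Prop) :
  (forall a, P a a 0) ->
  (forall a c b s, a <= c -> PS c b s -> P c b s -> P a b (d (g a) (g c) + s)) ->
  forall a b s, PS a b s -> P a b s.
Proof.
move=> H0 HS a b s [n [t [t0 tn tm ->]]].
elim: n a t t0 tn tm => [|n IH] a t t0 tn tm.
  by rewrite /psum big_ord0 -t0 tn.
have -> : psum t n.+1 = d (g a) (g (t 1%N)) + psum (fun i => t i.+1) n.
  by rewrite /psum big_ord_recl /= t0.
have PS' : PS (t 1%N) b (psum (fun i => t i.+1) n).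
  by exists n, (fun i => t i.+1); split => // i Hi; apply: tm.
apply: HS => //; first by rewrite -t0; apply: tm.
by apply: IH => // i Hi; apply: tm.
Qed.

Lemma PS_le a b s : PS a b s -> a <= b.
Proof. by move: a b s; apply: PS_elim => // a c b s ac _; apply: le_trans. Qed.

Lemma PS_ge a b s : PS a b s -> d (g a) (g b) <= s.
Proof.
move: a b s; apply: PS_elim => [a|a c b s _ _ H]; first by rewrite d_xx.
by apply: (le_trans (d_tri _ (g c) _)); rewrite lerD2l.
Qed.

Lemma PS_ge0 a b s : PS a b s -> 0 <= s.
Proof. by move=> /PS_ge; apply: le_trans; apply: d_ge0. Qed.

Lemma PS_refl a s : PS a a s -> s = 0.
Proof.
move: a s; suff: forall a b s, PS a b s -> a = b -> s = 0.
  by move=> H a s /H; apply.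
apply: PS_elim => // a c b s ac Hc IH ab; subst b.
have ca : c = a by apply/eqP; rewrite eq_le (PS_le Hc) ac.
by subst c; rewrite d_xx IH // add0r.
Qed.

Lemma PS_1 a b : a <= b -> PS a b (d (g a) (g b)).
Proof. by move=> ab; rewrite -[X in PS _ _ X]addr0; apply: PS_cons => //; apply: PS_0. Qed.

Lemma PS_cat a u b s1 s2 : PS a u s1 -> PS u b s2 -> PS a b (s1 + s2).
Proof.
move=> H; move: a u s1 H s2; apply: PS_elim => [a s2|a c u s ac Hc IH s2 H2].
  by rewrite add0r.
by rewrite -addrA; apply: PS_cons => //; apply: IH.
Qed.

Lemma PS_split a b s u : PS a b s -> a <= u <= b ->
  exists s1 s2, [/\ PS a u s1, PS u b s2 & s <= s1 + s2].
Proof.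
move=> H; move: a b s H u; apply: PS_elim => [a u /andP[au ua]|a c b s ac Hc IH u /andP[au ub]].
  have -> : u = a by apply/eqP; rewrite eq_le au ua.
  by exists 0, 0; split; rewrite ?addr0 //; apply: PS_0.
have [uc|cu] := leP u c.
  exists (d (g a) (g u)), (d (g u) (g c) + s); split.
  - exact: PS_1.
  - exact: PS_cons.
  - by rewrite addrA lerD2r d_tri.
have [s1 [s2 [H1 H2 H3]]] := IH u (andb_true_intro (conj (ltW cu) ub)).
exists (d (g a) (g c) + s1), s2; split => //.
- exact: PS_cons.
- by rewrite -addrA lerD2l.
Qed.

Lemma PS_right a b s : PS a b s -> exists2 eta, 0 < eta &
  forall t, a < t -> t < a + eta -> t <= b ->
  exists s2, PS t b s2 /\ s <= d (g a) (g t) + s2.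
Proof.
move: a b s; apply: PS_elim => [a|a c b s ac Hc [eta eta0 IH]].
  exists 1 => // t at1 _ tb; exfalso; move: (lt_le_trans at1 tb); by rewrite ltxx.
have [ac'|ca] := ltP a c.
  exists (c - a); first by rewrite subr_gt0.
  move=> t at1 tc tb; rewrite addrC subrK in tc.
  exists (d (g t) (g c) + s); split; first by apply: PS_cons => //; apply: ltW.
  by rewrite addrA lerD2r d_tri.
have ea : c = a by apply/eqP; rewrite eq_le ca ac.
subst c; exists eta => // t at1 tae tb.
by rewrite d_xx add0r; apply: IH.
Qed.

Lemma PS_left a b s : PS a b s -> exists2 eta, 0 < eta &
  forall t, b - eta < t -> t < b -> a <= t ->
  exists s1, PS a t s1 /\ s <= s1 + d (g t) (g b).
Proof.
move: a b s; apply: PS_elim => [a|a c b s ac Hc [eta eta0 IH]].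
  exists 1 => // t _ ta at1; exfalso; move: (lt_le_trans ta at1); by rewrite ltxx.
have [cb|bc] := ltP c b; last first.
  have ecb : c = b by apply/eqP; rewrite eq_le bc (PS_le Hc).
  subst c; rewrite (PS_refl Hc) addr0.
  exists 1 => // t _ tb at1; exists (d (g a) (g t)); split; first exact: PS_1.
  exact: d_tri.
exists (Num.min eta (b - c)); first by rewrite lt_min eta0 subr_gt0.
move=> t bt tb at1.
have ct : c <= t.
  have : b - (b - c) <= b - Num.min eta (b - c) by rewrite lerD2l lerN2 ge_min lexx orbT.
  rewrite opprB addrC subrK => H; exact/ltW/(le_lt_trans H bt).
have btc : b - eta < t.
  apply: le_lt_trans bt; rewrite lerD2l lerN2 ge_min lexx //.
have [s1 [H1 H2]] := IH t btc tb ct.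
exists (d (g a) (g c) + s1); split; first exact: PS_cons.
by rewrite -addrA lerD2l.
Qed.

End Parts.
Section Rect.
Variables (R : realType) (T : Type) (d : T -> T -> R).
Hypothesis dm : is_metric d.
Variables (g : R -> T) (a b : R).
Hypothesis cg : curve d g a b.
Hypothesis fin : (curve_length d g a b < +oo)%E.

Let hab : a <= b. Proof. by case: cg. Qed.

Definition M0 := fine (curve_length d g a b).

Lemma PS_ab_ub s : PS d g a b s -> s <= M0.
Proof.
move=> H; rewrite /M0.
have Hs : (s%:E <= curve_length d g a b)%E.
  by rewrite curve_length_PS; apply: ereal_sup_ubound; exists s.
have : curve_length d g a b \is a fin_num.
  by rewrite fin_numE -ltey fin andbT; apply/eqP => E; move: Hs; rewrite E.
by move=> /fineK E; rewrite -lee_fin E.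
Qed.

Lemma PS_sub_ub u v s : a <= u -> v <= b -> PS d g u v s -> s <= M0.
Proof.
move=> au vb H; have uv := PS_le H.
have := PS_cat (PS_cat (PS_1 d g au) H) (PS_1 d g vb).
move=> /PS_ab_ub; apply: le_trans.
rewrite -addrA addrC -addrA lerDl; apply: addr_ge0; apply: d_ge0 dm _ _.
Qed.

Definition ell u v := sup (PS d g u v).

Lemma has_sup_PS u v : a <= u -> u <= v -> v <= b -> has_sup (PS d g u v).
Proof.
move=> au uv vb; split; first by exists (d (g u) (g v)); apply: PS_1.
by exists M0 => s; apply: PS_sub_ub.
Qed.

Lemma ell_ub u v s : a <= u -> v <= b -> PS d g u v s -> s <= ell u v.
Proof.
move=> au vb H; have uv := PS_le H.
by apply: sup_ubound => //; case: (has_sup_PS au uv vb).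
Qed.

Lemma ell_le u v x : u <= v -> (forall s, PS d g u v s -> s <= x) -> ell u v <= x.
Proof. by move=> uv H; apply: ge_sup => //; exists (d (g u) (g v)); apply: PS_1. Qed.

Lemma ell_dist u v : a <= u -> u <= v -> v <= b -> d (g u) (g v) <= ell u v.
Proof. by move=> au uv vb; apply: ell_ub => //; apply: PS_1. Qed.

Lemma ell_ge0 u v : a <= u -> u <= v -> v <= b -> 0 <= ell u v.
Proof. by move=> au uv vb; apply: le_trans (ell_dist au uv vb); apply: d_ge0. Qed.

Lemma ell_refl u : ell u u = 0.
Proof.
apply/eqP; rewrite eq_le; apply/andP; split.
  by apply: ell_le => // s /(PS_refl dm) ->.
by apply: sup_ubound; [exists 0 => s /(PS_refl dm) -> | apply: PS_0].
Qed.

Lemma ell_add u v w : a <= u -> u <= v -> v <= w -> w <= b ->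
  ell u v + ell v w = ell u w.
Proof.
move=> au uv vw wb.
have uw := le_trans uv vw.
apply/eqP; rewrite eq_le; apply/andP; split.
  rewrite -lerBrDl; apply: ell_le => // s2 H2.
  rewrite lerBrDl addrC -lerBrDl; apply: ell_le => // s1 H1.
  rewrite lerBrDl addrC; apply: ell_ub => //.
  exact: PS_cat H1 H2.
apply: ell_le => // s H.
have [s1 [s2 [H1 H2 H3]]] := PS_split dm H (andb_true_intro (conj uv vw)).
apply: (le_trans H3); apply: lerD.
  by apply: ell_ub => //; apply: le_trans vw wb.
by apply: ell_ub => //; apply: le_trans au uv.
Qed.

Lemma len_eq u v : a <= u -> u <= v -> v <= b ->
  curve_length d g u v = (ell u v)%:E.
Proof.
move=> au uv vb; rewrite curve_length_PS ereal_sup_EFin //.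
  by exists M0 => s; apply: PS_sub_ub.
by exists (d (g u) (g v)); apply: PS_1.
Qed.

Lemma ell_right t0 : a <= t0 -> t0 < b -> forall e, 0 < e ->
  exists2 eta, 0 < eta & forall t, t0 < t -> t < t0 + eta -> t <= b -> ell t0 t < e.
Proof.
move=> at0 t0b e e0.
have e20 : 0 < e / 2 by rewrite divr_gt0.
case: cg => _ /(_ t0 (andb_true_intro (conj at0 (ltW t0b))) _ e20) [del del0 Hdel].
have [s Hs Hss] := sup_adherent e20 (has_sup_PS at0 (ltW t0b) (lexx b)).
have [eta eta0 Heta] := PS_right dm Hs.
exists (Num.min del eta); first by rewrite lt_min del0 eta0.
move=> t t0t tt0 tb.
have tt0e : t < t0 + eta by apply: lt_le_trans tt0 _; rewrite lerD2l ge_min lexx orbT.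
have [s2 [H2 H3]] := Heta t t0t tt0e tb.
have at1 : a <= t by apply: le_trans at0 (ltW t0t).
have dgt : d (g t0) (g t) < e / 2.
  apply: Hdel; first by rewrite at1 tb.
  rewrite distrC ger0_norm ?subr_ge0 ?ltW // ltrBlDl.
  by apply: lt_le_trans tt0 _; rewrite lerD2l ge_min lexx.
have s2le : s2 <= ell t b by apply: ell_ub.
have := ell_add at0 (ltW t0t) tb (lexx b).
move=> E; have -> : ell t0 t = ell t0 b - ell t b by rewrite -E addrK.
rewrite ltrBlDl; move: Hss; rewrite ltrBlDr => Hss.
apply: (lt_le_trans Hss); rewrite [in X in _ <= X](splitr e) addrA lerD2r.
apply: (le_trans H3); rewrite addrC lerD //; exact: ltW.
Qed.

Lemma ell_left t0 : a < t0 -> t0 <= b -> forall e, 0 < e ->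
  exists2 eta, 0 < eta & forall t, t0 - eta < t -> t < t0 -> a <= t -> ell t t0 < e.
Proof.
move=> at0 t0b e e0.
have e20 : 0 < e / 2 by rewrite divr_gt0.
case: cg => _ /(_ t0 (andb_true_intro (conj (ltW at0) t0b)) _ e20) [del del0 Hdel].
have [s Hs Hss] := sup_adherent e20 (has_sup_PS (lexx a) (ltW at0) t0b).
have [eta eta0 Heta] := PS_left dm Hs.
exists (Num.min del eta); first by rewrite lt_min del0 eta0.
move=> t t0t tt0 at1.
have t0te : t0 - eta < t.
  by apply: le_lt_trans t0t; rewrite lerD2l lerN2 ge_min lexx orbT.
have [s1 [H1 H3]] := Heta t t0te tt0 at1.
have tb : t <= b by apply: le_trans (ltW tt0) t0b.
have dgt : d (g t) (g t0) < e / 2.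
  rewrite d_sym //; apply: Hdel; first by rewrite at1 tb.
  rewrite ger0_norm ?subr_ge0 ?ltW // ltrBlDl addrC -ltrBlDl.
  by apply: le_lt_trans t0t; rewrite lerD2l lerN2 ge_min lexx.
have s1le : s1 <= ell a t by apply: ell_ub.
have := ell_add (lexx a) at1 (ltW tt0) t0b.
move=> E; have -> : ell t t0 = ell a t0 - ell a t by rewrite -E (addrC (ell a t)) addrK.
rewrite ltrBlDl; move: Hss; rewrite ltrBlDr => Hss.
apply: (lt_le_trans Hss); rewrite [in X in _ <= X](splitr e) addrA lerD2r.
apply: (le_trans H3); apply: lerD => //; exact: ltW.
Qed.

Lemma ell_ivt sig : 0 <= sig -> sig <= ell a b ->
  exists t, [/\ a <= t, t <= b & ell a t = sig].
Proof.
move=> s0 sab.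
pose A := [set t | a <= t /\ t <= b /\ ell a t <= sig].
have A0 : A a by split => //; split => //; rewrite ell_refl.
have hA : has_sup A by split; [exists a | exists b => t [_ []]].
pose c := sup A.
have ac : a <= c by apply: sup_ubound => //; case: hA.
have cb : c <= b by apply: ge_sup => //; [exists a | move=> t [_ []]].
exists c; split => //.
have [lt1|ge1] := ltP (ell a c) sig.
  exfalso.
  have cb' : c < b.
    rewrite lt_neqAle cb andbT; apply/eqP => E; move: lt1; rewrite E.
    by rewrite ltNge sab.
  have := @ell_right c ac cb' (sig - ell a c); rewrite subr_gt0 => /(_ lt1) [eta eta0 H].
  pose t := Num.min (c + eta / 2) b.
  have ct : c < t by rewrite lt_min cb' ltrDl divr_gt0.
  have tb : t <= b by rewrite ge_min lexx orbT.
  have tce : t < c + eta.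
    apply: le_lt_trans (_ : _ <= c + eta / 2) _; first by rewrite ge_min lexx.
    by rewrite ltrD2l ltr_pdivrMr // ltr_pMr // ltr1n.
  have := H t ct tce tb.
  rewrite ltrBrDl (ell_add (lexx a) ac (ltW ct) tb) => lt2.
  have : A t by split; [apply: le_trans ac (ltW ct) | split => //; apply: ltW].
  move=> /(sup_ubound (proj2 hA)) => /(lt_le_trans ct); by rewrite ltxx.
move: ge1; rewrite le_eqVlt => /predU1P[->//|gt1]; exfalso.
have ac' : a < c.
  rewrite lt_neqAle ac andbT; apply/eqP => E; move: gt1; rewrite -E ell_refl.
  by rewrite ltNge s0.
have := @ell_left c ac' cb (ell a c - sig); rewrite subr_gt0 => /(_ gt1) [eta eta0 H].
have [t [at1 [tb ts]] Ht] := sup_adherent eta0 hA.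
have tc : t <= c by apply: sup_ubound; [case: hA | by split].
move: tc; rewrite le_eqVlt => /predU1P[tc|tc].
  by move: gt1; rewrite -tc ltNge ts.
have E := ell_add (lexx a) at1 (ltW tc) cb.
have lt2 := H t Ht tc at1.
lra.
Qed.

End Rect.
Section Ftc.
Variable R : realType.
Local Notation mu := (@lebesgue_measure R).

Lemma is_derive_F (F : R -> R) (x df : R) : is_derive x 1 F df ->
  [/\ derivable F x 1, (F^`())%classic x = df & F x0 @[x0 --> x] --> F x].
Proof.
move=> H; split.
- exact: ex_derive.
- by rewrite derive1E derive_val.
- by apply: differentiable_continuous; apply/derivable1_diffP; exact: ex_derive.
Qed.

Lemma ftc_ln (f F : R -> R) (l : R) : 0 < l ->
  (forall x, 0 <= x <= l -> f x0 @[x0 --> x] --> f x) ->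
  (forall x, 0 <= x <= l -> is_derive x 1 F (f x)) ->
  (\int[mu]_(x in `[0%R, l]) (f x)%:E = (F l - F 0)%:E)%E.
Proof.
move=> l0 cf dF.
rewrite (@continuous_FTC2 _ _ F) //.
- apply: continuous_in_subspaceT => x; rewrite inE /= in_itv /= => Hx.
  exact: cf.
- split.
  + move=> x; rewrite in_itv /= => /andP[x0 xl].
    by case: (is_derive_F (dF x _)) => //; rewrite !ltW.
  + apply: cvg_at_right_filter.
    by case: (is_derive_F (dF 0 _)) => //; rewrite lexx ltW.
  + apply: cvg_at_left_filter.
    by case: (is_derive_F (dF l _)) => //; rewrite lexx ltW.
- move=> x; rewrite in_itv /= => /andP[x0 xl].
  by case: (is_derive_F (dF x _)) => //; rewrite !ltW.
Qed.

End Ftc.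
Section Ftc2.
Variable R : realType.
Local Notation mu := (@lebesgue_measure R).

Lemma aff_derive (p x : R) : is_derive x 1 (fun y : R => p + y) 1.
Proof.
have H := is_deriveD (is_derive_cst p x 1) (is_derive_id x (1:R)).
by rewrite add0r in H; exact: H.
Qed.

Lemma aff_deriveN (q x : R) : is_derive x 1 (fun y : R => q - y) (-1).
Proof.
have H := is_deriveD (is_derive_cst q x 1) (is_deriveN (is_derive_id x (1:R))).
by rewrite add0r in H; exact: H.
Qed.

Lemma cont_aff (p x : R) : p + x != 0 -> (fun y => (p + y)^-1) y0 @[y0 --> x] --> (p + x)^-1.
Proof.
move=> H; apply: (@continuousV _ _ (fun y => p + y)) => //.
by case: (is_derive_F (aff_derive p x)).
Qed.

Lemma cont_affN (q x : R) : q - x != 0 -> (fun y => (q - y)^-1) y0 @[y0 --> x] --> (q - x)^-1.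
Proof.
move=> H; apply: (@continuousV _ _ (fun y => q - y)) => //.
by case: (is_derive_F (aff_deriveN q x)).
Qed.

Lemma int_inv1 (p l : R) : 0 < p -> 0 <= l ->
  ((ln (p + l) - ln p)%:E <= \int[mu]_(x in `[0%R, l]) ((p + x)^-1)%:E)%E.
Proof.
move=> p0; rewrite le_eqVlt => /predU1P[<-|l0].
  rewrite addr0 subrr; apply: integral_ge0 => x; rewrite /= in_itv /= => /andP[x0 _].
  by rewrite lee_fin invr_ge0 addr_ge0 // ltW.
have cf : forall x, 0 <= x <= l -> (fun y => (p + y)^-1) y0 @[y0 --> x] --> (p + x)^-1.
  by move=> x /andP[x0 _]; apply: cont_aff; rewrite gt_eqF // ltr_wpDr.
have dF : forall x, 0 <= x <= l -> is_derive x 1 (fun x => ln (p + x)) ((p + x)^-1).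
  move=> x /andP[x0 _].
  have := is_derive1_comp (is_derive1_ln (_ : 0 < p + x)) (aff_derive p x).
  by rewrite mulr1; apply; rewrite ltr_wpDr.
by rewrite (ftc_ln l0 cf dF) [p + 0]addr0.
Qed.

Lemma int_inv2 (p l : R) : 0 < p -> 0 <= l ->
  ((ln (p + l) - ln p)%:E <= \int[mu]_(x in `[0%R, l]) ((p + l - x)^-1)%:E)%E.
Proof.
move=> p0; rewrite le_eqVlt => /predU1P[<-|l0].
  rewrite addr0 subrr; apply: integral_ge0 => x; rewrite /= in_itv /= => /andP[x0 x1].
  by rewrite lee_fin invr_ge0 subr_ge0 (le_trans x1) // ltW.
have cf : forall x, 0 <= x <= l -> (fun y => (p + l - y)^-1) y0 @[y0 --> x] --> (p + l - x)^-1.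
  move=> x /andP[x0 xl]; apply: cont_affN; rewrite gt_eqF // subr_gt0.
  by apply: le_lt_trans xl _; rewrite ltrDr.
have dF : forall x, 0 <= x <= l -> is_derive x 1 (fun x => - ln (p + l - x)) ((p + l - x)^-1).
  move=> x /andP[x0 xl].
  have pos : 0 < p + l - x by rewrite subr_gt0; apply: le_lt_trans xl _; rewrite ltrDr.
  have := is_deriveN (@is_derive1_comp _ (@ln R) (fun y => p + l - y) x _ _ (is_derive1_ln pos) (aff_deriveN (p + l) x)).
  by rewrite mulrN1 opprK.
rewrite (ftc_ln l0 cf dF) subr0 -addrA subrr addr0 opprK.
by rewrite addrC.
Qed.

End Ftc2.
Section IntMono.
Local Open Scope ereal_scope.
Context (dd : measure_display) (T : measurableType dd) (R : realType).
Variable mu : {measure set T -> \bar R}.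

Lemma int_mono (A B : set T) (f g : T -> \bar R) :
  (forall x, A x -> 0 <= f x) -> (forall x, B x -> 0 <= g x) ->
  A `<=` B -> (forall x, A x -> f x <= g x) ->
  \int[mu]_(x in A) f x <= \int[mu]_(x in B) g x.
Proof.
move=> f0 g0 AB fg; rewrite !ge0_integralE //.
apply: ge_ereal_sup => _ [h /= hf <-]; apply: ereal_sup_ubound => /=.
exists h => // x; apply: le_trans (hf x) _.
rewrite /patch; case: ifPn => Ax; last first.
  by case: ifPn => // Bx; apply: g0; rewrite -inE.
have Bx : x \in B by rewrite inE; apply: AB; rewrite -inE.
by rewrite Bx; apply: fg; rewrite -inE.
Qed.

End IntMono.

Section IntR.
Variable R : realType.
Local Notation mu := (@lebesgue_measure R).

Lemma int_cst_itv (c l : R) : 0 <= l ->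
  (\int[mu]_(x in `[0%R, l]) c%:E = (c * l)%:E)%E.
Proof.
move=> l0; rewrite integral_cst //=.
rewrite lebesgue_measure_itv /= lte_fin.
move: l0; rewrite le_eqVlt => /predU1P[<-|->].
  by rewrite ltxx mule0 mulr0.
by rewrite oppr0 addr0 -EFinM.
Qed.

Lemma line_int_ub (rho : R -> R) (l K : R) : 0 <= l ->
  (forall s, 0 <= s <= l -> 0 <= rho s <= K) ->
  (line_integral rho l <= (K * l)%:E)%E.
Proof.
move=> l0 H; rewrite /line_integral -int_cst_itv //.
apply: int_mono => s; rewrite /= ?in_itv /= => Hs.
- by rewrite lee_fin; case/andP: (H s Hs).
- by rewrite lee_fin; case/andP: (H s Hs) => r0 rK; apply: le_trans rK.
- by [].
- by rewrite lee_fin; case/andP: (H s Hs).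
Qed.

Lemma line_int_lb (rho h : R -> R) (l : R) :
  (forall s, 0 <= s <= l -> 0 <= h s <= rho s) ->
  (\int[mu]_(x in `[0%R, l]) (h x)%:E <= line_integral rho l)%E.
Proof.
move=> H; rewrite /line_integral.
apply: int_mono => s; rewrite /= ?in_itv /= => Hs.
- by rewrite lee_fin; case/andP: (H s Hs).
- by rewrite lee_fin; case/andP: (H s Hs) => r0 rK; apply: le_trans rK.
- by [].
- by rewrite lee_fin; case/andP: (H s Hs).
Qed.

End IntR.
Section QH.
Variables (R : realType) (T : Type) (d : T -> T -> R) (X : Type)
  (dX : X -> X -> R) (iota : T -> X).
Hypothesis dm : is_metric d.
Hypothesis oc : open_completion d dX iota.
Hypothesis bd : exists z : X, ~ range iota z.

Local Notation dO := (dist_bdry dX iota).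

Let dXm : is_metric dX. Proof. by case: oc. Qed.
Let diso x y : dX (iota x) (iota y) = d x y. Proof. by case: oc => _ H _ _ _; apply: H. Qed.

Let S x := [set dX (iota x) z | z in ~` range iota].

Let S0 x : S x !=set0.
Proof. by case: bd => z hz; exists (dX (iota x) z); exists z. Qed.

Let Slb x : has_lbound (S x).
Proof. by exists 0 => _ [z _ <-]; apply: d_ge0 dXm _ _. Qed.

Lemma dO_pos x : 0 < dO x.
Proof.
case: oc => _ _ _ _ /(_ (iota x)) [|e e0 He]; first by exists x.
apply: lt_le_trans e0 _; apply: lb_le_inf (S0 x) _ => _ [z hz <-].
rewrite leNgt; apply/negP => hlt; apply: hz; exact: He.
Qed.

Lemma dO_lip x y : dO y <= dO x + d x y.
Proof.
rewrite addrC -lerBlDl; apply: lb_le_inf (S0 x) _ => _ [z hz <-].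
rewrite lerBlDl; apply: le_trans (ge_inf (Slb y) _) _; first by exists z.
by rewrite (d_sym dm x y) -diso; exact: d_tri dXm _ _ _.
Qed.

Lemma dO_lip' x y : dO x - d x y <= dO y.
Proof. by rewrite lerBlDr (d_sym dm x y) dO_lip. Qed.

Local Notation k := (qh_dist d dO).

Lemma k_curve x y K : (k x y < K%:E)%E ->
  exists (l : R) (rho : R -> R), [/\ 0 <= l, d x y <= l,
    (line_integral rho l < K%:E)%E &
    forall s, 0 <= s <= l -> exists z, [/\ rho s = (dO z)^-1, d x z <= s & d z y <= l - s]].
Proof.
move=> /ereal_inf_lt [_ [a [b [g [gs [cg ga gb [fin arc] ->]]]]] HK].
have ab : a <= b by case: cg.
have Hl := @len_eq _ _ _ dm g a b fin a b (lexx a) ab (lexx b).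
exists (ell d g a b), (fun s => (dO (gs s))^-1); rewrite Hl /= in HK; split => //.
- exact: (@ell_ge0 _ _ _ dm g a b fin a b (lexx a) ab (lexx b)).
- by rewrite -ga -gb; apply: (@ell_dist _ _ _ dm g a b fin a b (lexx a) ab (lexx b)).
- move=> s /andP[s0 sl].
  have [t [at1 tb ts]] := @ell_ivt _ _ _ dm g a b cg fin s s0 sl.
  have gst : gs s = g t.
    by rewrite -ts -(arc t (andb_true_intro (conj at1 tb))) (@len_eq _ _ _ dm g a b fin a t (lexx a) at1 tb).
  exists (g t); split; first by rewrite gst.
  + by rewrite -ga -ts; exact: (@ell_dist _ _ _ dm g a b fin a t (lexx a) at1 tb).
  + rewrite -gb -ts -(@ell_add _ _ _ dm g a b fin a t b (lexx a) at1 tb (lexx b)) (addrC (ell d g a t)) addrK.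
    exact: (@ell_dist _ _ _ dm g a b fin t b at1 tb (lexx b)).
Qed.

Lemma k_lb_cst x y K : (k x y < K%:E)%E ->
  exists l, [/\ 0 <= l, d x y <= l & l / (dO x + l) < K].
Proof.
move=> /k_curve [l [rho [l0 dl HK Hz]]].
have c0 := dO_pos x.
exists l; split => //.
rewrite -lte_fin; apply: le_lt_trans HK.
rewrite (mulrC l) -int_cst_itv //; apply: line_int_lb => s Hs.
have [z [-> dxz dzy]] := Hz s Hs.
apply/andP; split; first by rewrite invr_ge0 addr_ge0 // ltW.
have z0 := dO_pos z.
have cl : 0 < dO x + l by rewrite ltr_wpDr.
rewrite lef_pV2 ?posrE //.
apply: le_trans (dO_lip x z) _; rewrite lerD2l; apply: le_trans dxz _.
by case/andP: Hs.
Qed.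

Lemma k_lb_ln1 x y K : (k x y < K%:E)%E ->
  exists l, [/\ 0 <= l, d x y <= l & ln (dO x + l) - ln (dO x) < K].
Proof.
move=> /k_curve [l [rho [l0 dl HK Hz]]].
have c0 := dO_pos x.
exists l; split => //.
rewrite -lte_fin; apply: le_lt_trans HK.
apply: le_trans (int_inv1 c0 l0) _; apply: line_int_lb => s Hs.
have [z [-> dxz dzy]] := Hz s Hs.
case/andP: Hs => s0 sl.
apply/andP; split; first by rewrite invr_ge0 addr_ge0 // ltW.
have z0 := dO_pos z.
have cl : 0 < dO x + s by rewrite ltr_wpDr.
rewrite lef_pV2 ?posrE //.
by apply: le_trans (dO_lip x z) _; rewrite lerD2l.
Qed.

Lemma k_lb_ln2 x y K : (k x y < K%:E)%E ->
  exists l, [/\ 0 <= l, d x y <= l & ln (dO y + l) - ln (dO y) < K].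
Proof.
move=> /k_curve [l [rho [l0 dl HK Hz]]].
have c0 := dO_pos y.
exists l; split => //.
rewrite -lte_fin; apply: le_lt_trans HK.
apply: le_trans (int_inv2 c0 l0) _; apply: line_int_lb => s Hs.
have [z [-> dxz dzy]] := Hz s Hs.
case/andP: Hs => s0 sl.
have pos : 0 < dO y + l - s by lra.
apply/andP; split; first by rewrite invr_ge0 ltW.
have z0 := dO_pos z.
rewrite lef_pV2 ?posrE //.
apply: le_trans (dO_lip y z) _; rewrite -addrA lerD2l d_sym //.
Qed.

End QH.
Section QH2.
Variables (R : realType) (T : Type) (d : T -> T -> R) (X : Type)
  (dX : X -> X -> R) (iota : T -> X) (L : R).
Hypothesis dm : is_metric d.
Hypothesis oc : open_completion d dX iota.
Hypothesis bd : exists z : X, ~ range iota z.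
Hypothesis qc : quasiconvex d L.

Local Notation dO := (dist_bdry dX iota).
Local Notation k := (qh_dist d dO).

Lemma frac_mono (c l m : R) : 0 <= l -> l <= m -> m < c -> l / (c - l) <= m / (c - m).
Proof.
move=> l0 lm mc.
have cl : 0 < c - l by rewrite subr_gt0; apply: le_lt_trans lm mc.
have cm : 0 < c - m by rewrite subr_gt0.
rewrite ler_pdivrMr // mulrAC ler_pdivlMr //.
nra.
Qed.

Lemma k_ub x y : L * d x y < dO x ->
  (k x y <= (L * d x y / (dO x - L * d x y))%:E)%E.
Proof.
move=> Hc.
have [a [b [g [cg ga gb hlen]]]] := qc x y.
have ab : a <= b by case: cg.
have fin : (curve_length d g a b < +oo)%E by apply: le_lt_trans hlen _; rewrite ltey.
have Hl := @len_eq _ _ _ dm g a b fin a b (lexx a) ab (lexx b).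
set l := ell d g a b in Hl.
have l0 : 0 <= l := @ell_ge0 _ _ _ dm g a b fin a b (lexx a) ab (lexx b).
have lm : l <= L * d x y by rewrite -lee_fin -Hl.
pose P s := [set t | (a <= t /\ t <= b) /\ ell d g a t = s].
pose gs s := g (xget a (P s)).
have arc : arclength_param d g a b gs.
  move=> t /andP[at1 tb].
  rewrite (@len_eq _ _ _ dm g a b fin a t (lexx a) at1 tb) /= /gs.
  have Pt : P (ell d g a t) (xget a (P (ell d g a t))) by apply: xgetPex; exists t.
  move: Pt; set t' := xget _ _ => -[[at' t'b] Et].
  have gE : forall u v, a <= u -> u <= v -> v <= b -> ell d g a u = ell d g a v -> g u = g v.
    move=> u v au uv vb E.
    have := @ell_add _ _ _ dm g a b fin a u v (lexx a) au uv vb.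
    rewrite E -[X in _ = X]addr0 => /addrI E0.
    have := @ell_dist _ _ _ dm g a b fin u v au uv vb; rewrite E0 => H.
    case: dm => H0 H1 _ _; apply/H1/eqP; rewrite eq_le H H0.
    done.
  have [tt'|t't] := leP t t'.
    by apply/esym/gE.
  by apply: gE => //; apply: ltW.
have key : forall s, 0 <= s <= l -> d x (gs s) <= s.
  move=> s /andP[s0 sl].
  have [ex|nex] := pselect (exists t, P s t).
    have [[at1 tb] ts] := xgetPex a ex; rewrite /gs -ga.
    apply: le_trans (@ell_dist _ _ _ dm g a b fin a _ (lexx a) at1 tb) _.
    by rewrite ts.
  rewrite /gs xgetPN; first by rewrite ga d_xx.
  by move=> t Pt; apply: nex; exists t.
have Hk : (k x y <= line_integral (fun s => ((dO (gs s))^-1)%R) l)%E.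
  apply: ereal_inf_lbound; exists a, b, g, gs; split => //.
  by rewrite Hl.
apply: (le_trans Hk).
have cl : 0 < dO x - l by rewrite subr_gt0; apply: le_lt_trans lm Hc.
apply: le_trans (line_int_ub (K := (dO x - l)^-1) l0 _) _.
  move=> s Hs; have := key s Hs; case/andP: Hs => s0 sl dxs.
  have z0 := dO_pos oc bd (gs s).
  apply/andP; split; first by rewrite invr_ge0 ltW.
  rewrite lef_pV2 ?posrE //.
  have := dO_lip' dm oc bd x (gs s); lra.
rewrite lee_fin mulrC; exact: frac_mono.
Qed.

End QH2.
Section Meas.
Variables (R : realType) (dd : measure_display) (T : measurableType dd)
  (d : T -> T -> R) (mu : {measure set T -> \bar R}) (Cmu alpha : R).
Hypothesis dm : is_metric d.
Hypothesis hB : @measurable _ T = <<s [set U | dopen d U] >>.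
Hypothesis hdbl : doubling_global mu (dball d) Cmu.

Lemma ball_open x r : dopen d (dball d x r).
Proof.
move=> y; rewrite /dball /= => hy.
exists (r - d x y); first by rewrite subr_gt0.
move=> z; rewrite /dball /= => hz.
have := d_tri dm x y z; lra.
Qed.

Lemma ball_meas x r : measurable (dball d x r).
Proof. by rewrite hB; apply: sub_gen_smallest; apply: ball_open. Qed.

Lemma mu_ball_le x r s : r <= s -> (mu (dball d x r) <= mu (dball d x s))%E.
Proof.
move=> rs; apply: le_measure; rewrite ?inE; try exact: ball_meas.
by move=> y; rewrite /dball /= => h; apply: lt_le_trans h rs.
Qed.

Lemma mu_ball_pos x r : 0 < r -> (0 < mu (dball d x r))%E.
Proof.
move=> r0; have := hdbl x (_ : 0 < r / 2); rewrite divr_gt0 // => /(_ isT) [H _ _].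
by move: H; rewrite mulrC divfK // pnatr_eq0.
Qed.

Lemma mu_ball_fin x r : 0 < r -> (mu (dball d x r) < +oo)%E.
Proof. by move=> r0; case: (hdbl x r0). Qed.

Lemma Cmu_gt0 (x : T) : 0 < Cmu.
Proof.
have [H1 H2 _] := hdbl x (ltr01 : (0:R) < 1).
rewrite ltNge; apply/negP => C0.
have : (Cmu%:E * mu (dball d x 1) <= 0)%E.
  by apply: mule_le0_ge0; rewrite ?lee_fin //; apply: measure_ge0.
move=> H; have := lt_le_trans H1 (le_trans H2 H); by rewrite ltxx.
Qed.

Lemma mu_ball_iter (x : T) n r : 0 < r ->
  (mu (dball d x ((2:R) ^+ n * r)) <= (Cmu ^+ n)%:E * mu (dball d x r))%E.
Proof.
move=> r0; elim: n => [|n IH]; first by rewrite expr0 mul1r mul1e.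
have p0 : 0 < (2:R) ^+ n * r by rewrite mulr_gt0 // exprn_gt0.
have [_ H _] := hdbl x p0.
rewrite exprS -mulrA; apply: (le_trans H).
rewrite exprS EFinM -muleA; apply: lee_wpmul2l => //.
by rewrite lee_fin ltW // (Cmu_gt0 x).
Qed.

Definition nu (dO : T -> R) (E : set T) :=
  (\int[mu]_(y in E) ((dO y) `^ (- alpha))%:E)%E.

Lemma nu_mono dO (A B : set T) : A `<=` B -> (nu dO A <= nu dO B)%E.
Proof.
move=> AB; apply: int_mono => // y _; rewrite lee_fin; exact: powR_ge0.
Qed.

Lemma nu_ge0 dO (A : set T) : (0 <= nu dO A)%E.
Proof. by apply: integral_ge0 => y _; rewrite lee_fin; exact: powR_ge0. Qed.

Lemma chain (dO : T -> R) x (Bs Bb : set T) (rs rb P U V : R) (N : nat) :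
  0 < rs -> 0 < P -> 0 < V -> 0 <= U -> rb <= 2 ^+ N * rs ->
  dball d x rs `<=` Bs -> Bs `<=` Bb -> Bb `<=` dball d x rb ->
  (forall y, Bb y -> (dO y) `^ (- alpha) <= P * U) ->
  (forall y, dball d x rs y -> P * V <= (dO y) `^ (- alpha)) ->
  [/\ (0 < nu dO Bb)%E, (nu dO Bb <= ((U / V) * Cmu ^+ N)%:E * nu dO Bs)%E
    & (nu dO Bs < +oo)%E].
Proof.
move=> rs0 P0 V0 U0 rbN sBs sBb sBr Hup Hlo.
have Cm0 := Cmu_gt0 x.
set A := mu (dball d x rs).
have A0 : (0 < A)%E by exact: mu_ball_pos.
have Afin : (A < +oo)%E by exact: mu_ball_fin.
have Ar : A = (fine A)%:E.
  by rewrite fineK // fin_numE -ltey Afin andbT; apply/eqP => E; move: A0; rewrite E.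
set a := fine A in Ar.
have a0 : 0 < a by rewrite -lte_fin -Ar.
have lo : ((P * V * a)%:E <= nu dO Bs)%E.
  apply: le_trans (nu_mono dO sBs).
  rewrite EFinM -Ar -integral_cst; last exact: ball_meas.
  apply: int_mono.
  - by move=> y _; rewrite lee_fin; apply: mulr_ge0; apply: ltW.
  - by move=> y _; rewrite lee_fin; exact: powR_ge0.
  - by [].
  - by move=> y hy; rewrite lee_fin; apply: Hlo.
have up : (nu dO Bb <= (P * U * (Cmu ^+ N * a))%:E)%E.
  apply: (@le_trans _ _ ((P * U)%:E * mu (dball d x rb))%E).
    rewrite -integral_cst; last exact: ball_meas.
    apply: int_mono.
    - by move=> y _; rewrite lee_fin; exact: powR_ge0.
    - by move=> y _; rewrite lee_fin; apply: mulr_ge0 => //; apply: ltW.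
    - exact: sBr.
    - by move=> y hy; rewrite lee_fin; apply: Hup.
  rewrite [X in (_ <= X)%E]EFinM; apply: lee_wpmul2l; first by rewrite lee_fin mulr_ge0 // ltW.
  apply: le_trans (mu_ball_le x rbN) _.
  by apply: le_trans (mu_ball_iter x N rs0) _; rewrite -/A Ar -EFinM.
split.
- apply: lt_le_trans (nu_mono dO sBb).
  apply: lt_le_trans lo; rewrite lte_fin; apply: mulr_gt0 => //; exact: mulr_gt0.
- apply: (le_trans up).
  have h0 : (0 <= (U / V * Cmu ^+ N)%:E)%E.
    by rewrite lee_fin mulr_ge0 // ?divr_ge0 ?exprn_ge0 // ltW.
  apply: le_trans (lee_wpmul2l h0 lo).
  rewrite -EFinM lee_fin le_eqVlt; apply/orP; left; apply/eqP; field.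
  by rewrite gt_eqF.
- apply: le_lt_trans (nu_mono dO sBb) _; apply: le_lt_trans up _; exact: ltey.
Qed.

End Meas.
Section Pow.
Variable R : realType.

Lemma wmono (alpha u v : R) : 0 <= alpha -> 0 < u -> u <= v ->
  v `^ (- alpha) <= u `^ (- alpha).
Proof.
move=> a0 u0 uv; rewrite !powRN lef_pV2 ?posrE ?powR_gt0 //; last exact: lt_le_trans uv.
by apply: ge0_ler_powR => //; rewrite ?nnegrE ltW // (lt_le_trans u0 uv).
Qed.

Lemma half_pow (a : R) : (2^-1 : R) `^ (- a) = 2 `^ a.
Proof.
have H : (2 : R) `^ a * (2^-1) `^ a = 1.
  by rewrite -powRM ?invr_ge0 // divff ?pnatr_eq0 // powR1.
have H2 : (2 : R) `^ a != 0 by rewrite gt_eqF // powR_gt0.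
have hq : (2^-1 : R) `^ a = (2 `^ a)^-1.
  by apply: (mulfI H2); rewrite H mulfV.
by rewrite powRN hq invrK.
Qed.

End Pow.

Section Geo.
Variables (R : realType) (T : Type) (d : T -> T -> R) (X : Type)
  (dX : X -> X -> R) (iota : T -> X) (L : R).
Hypothesis dm : is_metric d.
Hypothesis oc : open_completion d dX iota.
Hypothesis bd : exists z : X, ~ range iota z.
Hypothesis qc : quasiconvex d L.

Local Notation dO := (dist_bdry dX iota).
Local Notation k := (qh_dist d dO).

Lemma L_ge1 : 1 <= L.
Proof.
have [z hz] := bd.
case: oc => dXm diso dens _ _.
have [x0 hx0] := dens z 1 ltr01.
have e0 : 0 < dX z (iota x0).
  rewrite lt_neqAle (d_ge0 dXm) andbT; apply/eqP => E.
  by apply: hz; exists x0 => //; apply/esym; case: dXm => _ H _ _; apply/H; rewrite E.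
have [x1 hx1] := dens z (dX z (iota x0) / 2) (divr_gt0 e0 (ltr0n _ 2)).
have d01 : 0 < d x0 x1.
  rewrite lt_neqAle (d_ge0 dm) andbT; apply/eqP => E.
  have x01 : x0 = x1 by case: dm => _ H _ _; apply/H.
  by move: hx1; rewrite -x01 => h; lra.
have [a [b [g [cg ga gb hlen]]]] := qc x0 x1.
have ab : a <= b by case: cg.
have : ((d x0 x1)%:E <= curve_length d g a b)%E.
  rewrite curve_length_PS; apply: ereal_sup_ubound; exists (d x0 x1) => //.
  by rewrite -ga -gb; apply: PS_1.
move=> /le_trans /(_ hlen); rewrite lee_fin -{1}(mul1r (d x0 x1)).
by rewrite ler_pM2r.
Qed.

Let L0 : 0 < L. Proof. by apply: lt_le_trans L_ge1. Qed.

Lemma kb_small x r : 0 < r ->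
  dball d x (r * dO x / (L * (1 + r))) `<=` kball k x r.
Proof.
move=> r0 y; rewrite /dball /kball /= => hy.
have c0 := dO_pos oc bd x.
have Lr : 0 < L * (1 + r) by rewrite mulr_gt0 // addr_gt0.
move: hy; rewrite ltr_pdivlMr // => hy.
set m := L * d x y.
have e : L * d x y * (1 + r) = d x y * (L * (1 + r)) by ring.
have hm : m * (1 + r) < r * dO x by rewrite /m e.
have m0 : 0 <= m by apply: mulr_ge0; [exact: ltW L0 | exact: d_ge0 dm _ _].
have mc : m < dO x by nra.
apply: le_lt_trans (k_ub dm oc bd qc mc) _.
rewrite lte_fin ltr_pdivrMr ?subr_gt0 //; lra.
Qed.

Lemma kb_mono x r s : r <= s -> kball k x r `<=` kball k x s.
Proof. by move=> rs y; rewrite /kball /= => h; apply: lt_le_trans h _; rewrite lee_fin. Qed.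

Lemma kb_big_cst x r : 0 < r < 1 ->
  kball k x r `<=` dball d x (r * dO x / (1 - r)).
Proof.
move=> /andP[r0 r1] y; rewrite /dball /kball /= => /(k_lb_cst dm oc bd) [l [l0 dl hl]].
have c0 := dO_pos oc bd x.
move: hl; rewrite ltr_pdivrMr ?ltr_wpDr // => hl.
apply: le_lt_trans dl _; rewrite ltr_pdivlMr ?subr_gt0 //; lra.
Qed.

Lemma kb_big_ln x K y : kball k x K y ->
  d x y < dO x * expR K /\ dO x * expR (- K) < dO y.
Proof.
rewrite /kball /= => hk; split.
  have [l [l0 dl hl]] := k_lb_ln1 dm oc bd hk.
  have c0 := dO_pos oc bd x.
  have cl : 0 < dO x + l by rewrite ltr_wpDr.
  have h1 : ln (dO x + l) < ln (dO x) + K by lra.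
  have h2 : expR (ln (dO x + l)) < expR (ln (dO x) + K) by rewrite ltr_expR.
  rewrite expRD !lnK ?posrE // in h2; lra.
have [l [l0 dl hl]] := k_lb_ln2 dm oc bd hk.
have c0 := dO_pos oc bd x.
have y0 := dO_pos oc bd y.
have yl : 0 < dO y + l by rewrite ltr_wpDr.
have cyl : dO x <= dO y + l.
  by apply: le_trans (dO_lip dm oc bd y x) _; rewrite lerD2l (d_sym dm).
have : ln (dO x) - ln (dO y) < K.
  apply: le_lt_trans hl; rewrite lerD2r ler_ln ?posrE //.
move=> h1.
have h2 : expR (ln (dO x) + - K) < expR (ln (dO y)) by rewrite ltr_expR; lra.
by rewrite expRD !lnK ?posrE // in h2.
Qed.

End Geo.
Section Main.
Variables (R : realType) (dd : measure_display) (T : measurableType dd)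
  (d : T -> T -> R) (X : Type) (dX : X -> X -> R) (iota : T -> X)
  (L : R) (mu : {measure set T -> \bar R}) (Cmu alpha : R).
Hypothesis dm : is_metric d.
Hypothesis oc : open_completion d dX iota.
Hypothesis bd : exists z : X, ~ range iota z.
Hypothesis qc : quasiconvex d L.
Hypothesis hB : @measurable _ T = <<s [set U | dopen d U] >>.
Hypothesis hdbl : doubling_global mu (dball d) Cmu.
Hypothesis a0 : 0 < alpha.

Local Notation dO := (dist_bdry dX iota).
Local Notation k := (qh_dist d dO).
Local Notation nu := (nu mu alpha dO).

Let L1 : 1 <= L. Proof. exact: L_ge1 dm oc bd qc. Qed.

Lemma two_pow_ge n : (n%:R : R) <= 2 ^+ n.
Proof. by rewrite -natrX ler_nat ltnW // ltn_expl. Qed.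

Lemma m_spec : exists n : nat,
  Num.ceil (ln (8 * L) / ln 2) = n%:Z /\ 8 * L <= 2 ^+ n.
Proof.
have L1' := L1.
have l2 : 0 < ln (2 : R) by rewrite ln_gt0 // ltr1n.
have l8 : 0 < ln (8 * L) by rewrite ln_gt0 //; lra.
set m := Num.ceil _.
have hm : ln (8 * L) / ln 2 <= m%:~R := ceil_ge _.
have m0 : 0 <= m.
  by rewrite -(ler0z R); apply: le_trans hm; rewrite ltW // divr_gt0.
exists `|m|%N; split; first by rewrite gez0_abs.
rewrite -ler_ln ?posrE ?exprn_gt0 //; last lra.
rewrite lnXn // -(mulr_natr (ln 2)).
move: hm; rewrite ler_pdivrMr // => hm; apply: le_trans hm _.
by rewrite mulrC -[m in m%:~R](gez0_abs m0).
Qed.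

Lemma part1 x r : 0 < r -> r <= 1 / 8 ->
  [/\ (0 < nu (kball k x (2 * r)))%E,
      (nu (kball k x (2 * r)) <=
        (4 `^ alpha * Cmu `^ ((Num.ceil (ln (8 * L) / ln 2))%:~R))%:E * nu (kball k x r))%E
    & (nu (kball k x r) < +oo)%E].
Proof.
move=> r0 r8.
have L1' := L1.
have [n [-> hn]] := m_spec.
have c0 := dO_pos oc bd x.
set c := dO x.
have Cm0 := Cmu_gt0 hdbl x.
pose rho1 := r * c / (L * (1 + r)).
pose rho2 := 2 * r * c / (1 - 2 * r).
pose P := c `^ (- alpha).
pose V := (4 / 3 : R) `^ (- alpha).
pose U := 2 `^ alpha * V.
have L0 : 0 < L by lra.
have rho1_0 : 0 < rho1 by rewrite /rho1 divr_gt0 ?mulr_gt0 //; lra.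
have rho1_le : rho1 <= c / 3.
  rewrite /rho1 ler_pdivrMr ?mulr_gt0 //; last lra.
  rewrite mulrAC ler_pdivlMr //.
  have h : 3 * r <= L * (1 + r) by nra.
  have := ler_wpM2l (ltW c0) h; lra.
have rho2_le : rho2 <= c / 3.
  rewrite /rho2 ler_pdivrMr; last lra.
  have := mulr_ge0 (ltW c0) (_ : 0 <= 1 - 8 * r); lra.
have E8 : 8 * L * rho1 = 8 * r * c / (1 + r).
  by rewrite /rho1; field; apply/andP; split; apply/lt0r_neq0; lra.
have rho21 : rho2 <= 2 ^+ n * rho1.
  apply: le_trans (_ : rho2 <= 8 * L * rho1) _; last by apply: ler_wpM2r => //; apply: ltW.
  rewrite E8 /rho2 ler_pdivrMr; last lra.
  rewrite [X in _ <= X]mulrAC ler_pdivlMr; last lra.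
  have := mulr_ge0 (mulr_ge0 (ltW r0) (ltW c0)) (_ : 0 <= 6 - 18 * r); lra.
have V0 : 0 < V by apply: powR_gt0.
have r2 : r <= 2 * r by lra.
have r21 : 0 < 2 * r < 1 by apply/andP; split; lra.
have Hup : forall y, kball k x (2 * r) y -> (dO y) `^ (- alpha) <= P * U.
  move=> y /(kb_big_cst dm oc bd r21) hy'.
  have hy : d x y < rho2 := hy'.
  have := dO_lip' dm oc bd x y; rewrite -/c => hl.
  have c23 : c * (2^-1 * (4 / 3)) <= dO y by lra.
  apply: le_trans (wmono (ltW a0) _ c23) _.
    by rewrite mulr_gt0 //; lra.
  rewrite powRM; [|lra|lra].
  by rewrite powRM ?half_pow //; lra.
have Hlo : forall y, dball d x rho1 y -> P * V <= (dO y) `^ (- alpha).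
  move=> y hy.
  have := dO_lip dm oc bd x y; rewrite -/c => hl.
  have hyv : dO y <= c * (4 / 3) by rewrite /dball /= in hy; lra.
  rewrite /P /V -powRM; [|lra|lra].
  by apply: wmono => //; [exact: ltW | exact: dO_pos oc bd y].
have [pos le fin] := @chain _ _ _ _ _ _ _ dm hB hdbl dO x (kball k x r) (kball k x (2 * r))
  rho1 rho2 P U V n rho1_0 (powR_gt0 _ c0) V0
  (mulr_ge0 (powR_ge0 _ _) (ltW V0)) rho21
  (kb_small dm oc bd qc r0) (kb_mono r2)
  (kb_big_cst dm oc bd r21) Hup Hlo.
split => //; apply: le_trans le _.
apply: lee_wpmul2r; first exact: nu_ge0.
rewrite lee_fin powR_mulrn; last exact: ltW.
apply: ler_wpM2r; first by rewrite exprn_ge0 // ltW.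
rewrite /U mulfK; last exact: lt0r_neq0.
by apply: ge0_ler_powR; rewrite ?nnegrE //; [apply: ltW | lra].
Qed.

Lemma part2 R1 : 0 < R1 -> exists C : R, forall x r, 0 < r -> r <= R1 ->
  [/\ (0 < nu (kball k x (2 * r)))%E,
      (nu (kball k x (2 * r)) <= C%:E * nu (kball k x r))%E
    & (nu (kball k x r) < +oo)%E].
Proof.
move=> R10.
have L1' := L1.
have L0 : 0 < L by lra.
pose C1 := 4 `^ alpha * Cmu `^ ((Num.ceil (ln (8 * L) / ln 2))%:~R).
pose K := 2 * R1.
pose N2 := Num.Def.archi_bound (9 * L * expR K).
pose V := (4 / 3 : R) `^ (- alpha).
pose U2 := (expR (- K)) `^ (- alpha).
have V0 : 0 < V by apply: powR_gt0.
have U20 : 0 <= U2 by apply: powR_ge0.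
have C10 : 0 <= C1 by rewrite mulr_ge0 // powR_ge0.
pose C2 := U2 / V * Cmu ^+ N2.
exists (C1 + C2) => x r r0 rR.
have Cm0 := Cmu_gt0 hdbl x.
have C20 : 0 <= C2 by rewrite mulr_ge0 ?divr_ge0 ?exprn_ge0 // ltW.
have [r8|r8] := leP r (1 / 8).
  have [pos le fin] := part1 x r0 r8.
  split => //; apply: le_trans le _.
  apply: lee_wpmul2r; first exact: nu_ge0.
  by rewrite lee_fin lerDl.
have c0 := dO_pos oc bd x.
set c := dO x.
pose P := c `^ (- alpha).
pose rs := 1 / 8 * c / (L * (1 + 1 / 8)).
pose rb := c * expR K.
have rs0 : 0 < rs by rewrite /rs divr_gt0 ?mulr_gt0 //; lra.
have rs_le : rs <= c / 3.
  rewrite /rs ler_pdivrMr; last by apply: mulr_gt0; lra.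
  have h : 3 * (1 / 8) <= L * (1 + 1 / 8) by lra.
  have := ler_wpM2l (ltW c0) h; lra.
have E9 : 9 * L * expR K * rs = c * expR K.
  by rewrite /rs; field; apply/lt0r_neq0.
have hN : 9 * L * expR K <= 2 ^+ N2.
  apply: le_trans (two_pow_ge N2); apply: ltW; apply: archi_boundP.
  by rewrite mulr_ge0 ?expR_ge0 // mulr_ge0 //; lra.
have rbN : rb <= 2 ^+ N2 * rs.
  by rewrite /rb -E9; apply: ler_wpM2r => //; apply: ltW.
have r18 : 1 / 8 <= r by apply: ltW.
have r2 : r <= 2 * r by lra.
have r2K : 2 * r <= K by rewrite /K; lra.
have sBs : dball d x rs `<=` kball k x r.
  by move=> y hy; apply: (kb_mono r18); apply: (kb_small dm oc bd qc (_ : 0 < 1 / 8)) => //; lra.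
have sBr : kball k x (2 * r) `<=` dball d x rb.
  by move=> y hy; have [h _] := kb_big_ln dm oc bd (kb_mono r2K hy); exact: h.
have Hup : forall y, kball k x (2 * r) y -> (dO y) `^ (- alpha) <= P * U2.
  move=> y hy; have [_ h] := kb_big_ln dm oc bd (kb_mono r2K hy).
  rewrite /P /U2 -powRM; [|lra|exact: expR_ge0].
  apply: wmono; [exact: ltW | | exact: ltW].
  by rewrite mulr_gt0 // expR_gt0.
have Hlo : forall y, dball d x rs y -> P * V <= (dO y) `^ (- alpha).
  move=> y hy.
  have := dO_lip dm oc bd x y; rewrite -/c => hl.
  have hyv : dO y <= c * (4 / 3) by rewrite /dball /= in hy; lra.
  rewrite /P /V -powRM; [|lra|lra].
  by apply: wmono => //; [exact: ltW | exact: dO_pos oc bd y].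
have [pos le fin] := @chain _ _ _ _ _ _ _ dm hB hdbl dO x (kball k x r) (kball k x (2 * r))
  rs rb P U2 V N2 rs0 (powR_gt0 _ c0) V0 U20 rbN sBs (kb_mono r2) sBr Hup Hlo.
split => //; apply: le_trans le _.
apply: lee_wpmul2r; first exact: nu_ge0.
by rewrite lee_fin lerDr.
Qed.

End Main.
Unset Implicit Arguments.

Theorem proposition7p3 (R : realType) (dd : measure_display) (T : measurableType dd)
  (d : T -> T -> R) (X : Type) (dX : X -> X -> R) (iota : T -> X)
  (L : R) (mu : {measure set T -> \bar R}) (Cmu alpha : R) :
  is_metric d ->
  open_completion d dX iota ->
  (exists z : X, ~ range iota z) ->
  quasiconvex d L ->
  @measurable _ T = <<s [set U | dopen d U] >> ->
  doubling_global mu (dball d) Cmu ->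
  0 < alpha ->
  let dO := dist_bdry dX iota in
  let k := qh_dist d dO in
  let m : int := Num.ceil (ln (8 * L) / ln 2) in
  doubling_upto (weighted_measure mu dO alpha) (kball k) (1 / 8)
    (4 `^ alpha * Cmu `^ (m%:~R)) /\
  (forall R1 : R, 0 < R1 -> exists C : R,
    doubling_upto (weighted_measure mu dO alpha) (kball k) R1 C).
Proof.
move=> dm oc bd qc hB hdbl a0 dO k m; split.
  move=> x r r0 r8.
  exact: (part1 dm oc bd qc hB hdbl a0 x r0 r8).
move=> R1 R10.
have [C HC] := part2 dm oc bd qc hB hdbl a0 R10.
by exists C => x r r0 rR; exact: HC.
Qed.
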